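(* Let $\mathcal G=(\mathcal V,\mathcal E,w)$ be a finite, undirected, connected graph with $n$ vertices and positive edge weights, and let $Q=D+A$ be its signless Laplacian matrix. Let $w^*>0$ be a real number that is the weight of at least one $(m,k)$-star of $\mathcal G$. Let $\mathcal S_{w^*}$ be the set of all $(m,k)$-stars of $\mathcal G$ (as $m,k$ range over the positive integers with $m+k\le n$) whose weight is defined and equals $w^*$, and let $\deg(\mathcal S_{w^*})=\sum_{S_{m,k}\in\mathcal S_{w^*}}(m-1)$. Then $w^*$ is an eigenvalue of $Q$ with algebraic multiplicity at least $\deg(\mathcal S_{w^*})$.
   Context: Weighted adjacency matrix: $A_{ij}=w(i,j)$ if $\{i,j\}\in\mathcal E$ and $A_{ij}=0$ otherwise (no loops); $D=\mathrm{diag}(s(1),\dots,s(n))$ with strength $s(i)=\sum_jA_{ij}$. An $(m,k)$-star of $\mathcal G$, denoted $S_{m,k}$, is a pair $(\mathcal V_1,\mathcal V_2)$ of disjoint vertex sets with $|\mathcal V_1|=m\ge 2$, $|\mathcal V_2|=k$, such that every vertex of $\mathcal V_1$ is adjacent to every vertex of $\mathcal V_2$ and to no vertex outside $\mathcal V_2$; the sets are uniquely determined, i.e. $\mathcal V_1$ is the set of all vertices whose neighbourhood is exactly $\mathcal V_2$ (so distinct stars have disjoint $\mathcal V_1$). Its degree is $m-1$. Its weight is defined only when $w(i,j)=w(i',j)$ for all $i,i'\in\mathcal V_1$, $j\in\mathcal V_2$, and then equals $\sum_{j\in\mathcal V_2}w(i,j)$ for any $i\in\mathcal V_1$. *)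

(* Defs.v *)
From HB Require Import structures.
From mathcomp Require Import all_boot all_order all_algebra.
Set Implicit Arguments. Unset Strict Implicit. Unset Printing Implicit Defensive.
Import Order.TTheory GRing.Theory Num.Theory.
Local Open Scope ring_scope.

Section Graph.
Variables (R : realFieldType) (n : nat).
Variables (e : rel 'I_n) (w : 'I_n -> 'I_n -> R).

Definition adjmx : 'M[R]_n := \matrix_(i, j) (if e i j then w i j else 0).

Definition strength (i : 'I_n) : R := \sum_j adjmx i j.

Definition degmx : 'M[R]_n := \matrix_(i, j) ((i == j)%:R * strength i).

Definition signless_laplacian : 'M[R]_n := degmx + adjmx.

Definition nbhd (i : 'I_n) : {set 'I_n} := [set j | e i j].

(* A star is determined by its set V2 : V1 is the set of all vertices whose
   neighbourhood is exactly V2. *)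
Definition star_V1 (V2 : {set 'I_n}) : {set 'I_n} := [set i | nbhd i == V2].

(* (m,k)-star with m = #|V1| >= 2, k = #|V2| >= 1 *)
Definition is_star (V2 : {set 'I_n}) : bool :=
  (1 < #|star_V1 V2|)%N && (0 < #|V2|)%N.

Definition star_weight_defined (V2 : {set 'I_n}) : bool :=
  [forall i in star_V1 V2, forall i' in star_V1 V2, forall j in V2,
     w i j == w i' j].

Definition star_has_weight (V2 : {set 'I_n}) (c : R) : bool :=
  [&& is_star V2, star_weight_defined V2 &
      [forall i in star_V1 V2, \sum_(j in V2) w i j == c]].

Definition stars_of_weight (c : R) : {set {set 'I_n}} :=
  [set V2 | star_has_weight V2 c].

Definition stars_deg (c : R) : nat :=
  (\sum_(V2 in stars_of_weight c) (#|star_V1 V2| - 1))%N.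

End Graph.

(* Main.v *)
Require Import Defs.
From HB Require Import structures.
From mathcomp Require Import all_boot all_order all_algebra.
Set Implicit Arguments. Unset Strict Implicit. Unset Printing Implicit Defensive.
Import Order.TTheory GRing.Theory Num.Theory.
Local Open Scope ring_scope.

Lemma key (F : fieldType) n (A : 'M[F]_n) (a : F) (B : {set 'I_n})
  (r : 'I_n -> 'I_n) :
  (forall b, b \in B -> r b \notin B) ->
  (forall b, b \in B -> ('e_b - 'e_(r b)) *m A = a *: ('e_b - 'e_(r b) : 'rV_n)) ->
  ('X - a%:P) ^+ #|B| %| char_poly A.
Proof.
move=> hr heig.
pose N : 'M[F]_n := \matrix_(i, j) ((i \in B) && (j == r i))%:R.
pose P : 'M[F]_n := 1%:M - N.
have NN : N *m N = 0.
  apply/matrixP => i j; rewrite !mxE; apply: big1 => k _; rewrite !mxE.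
  case: (boolP (i \in B)) => iB /=; last by rewrite mul0r.
  case: eqP => [->|]; last by rewrite mul0r.
  by rewrite (negbTE (hr i iB)) mulr0.
have Pu : P \in unitmx.
  have [] := @mulmx1_unit _ _ P (1%:M + N) => //.
  by rewrite /P mulmxDr mulmx1 !mulmxBl mul1mx NN subr0 subrK.
have hrowP i : i \in B -> row i P = 'e_i - 'e_(r i).
  move=> iB; apply/rowP => j; rewrite !mxE iB eqxx /= [j == r i]eq_sym.
  by rewrite [j == i]eq_sym.
pose CA := char_poly_mx A.
pose PP := map_mx polyC P.
pose d : 'rV[{poly F}]_n := \row_i (if i \in B then 'X - a%:P else 1).
pose M' := \matrix_(i, j) (if i \in B then (P i j)%:P else (PP *m CA) i j).
have eqM : PP *m CA = diag_mx d *m M'.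
  apply/row_matrixP => i; rewrite (row_mul i (diag_mx d) M') row_diag_mx -scalemxAl -rowE.
  idtac.
  rewrite [d 0 i]mxE; case: (boolP (i \in B)) => iB; last first.
    by rewrite scale1r; apply/rowP => j; rewrite !mxE (negbTE iB).
  have -> : row i M' = map_mx polyC (row i P).
    by apply/rowP => j; rewrite !mxE iB.
  rewrite row_mul /PP -map_row /CA /char_poly_mx mulmxBr mul_mx_scalar -map_mxM hrowP //.
  by rewrite heig // map_mxZ scalerBl.
have := congr1 determinant eqM.
rewrite !det_mulmx det_map_mx det_diag /=.
have -> : \prod_i d 0 i = ('X - a%:P) ^+ #|B|.
  rewrite -prodr_const [RHS]big_mkcond /=; apply: eq_bigr => i _.
  by rewrite mxE.
move=> h.
have dP : \det P != 0 by rewrite -unitfE -unitmxE.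
have -> : char_poly A = ('X - a%:P) ^+ #|B| * ((\det P)^-1%:P * \det M').
  rewrite mulrCA -h mulrA -polyCM mulVf // mul1r //.
by apply: dvdp_mulr.
Qed.

Theorem corollary1 (R : realFieldType) (n : nat) (e : rel 'I_n)
    (w : 'I_n -> 'I_n -> R)
    (e_sym : symmetric e) (e_irr : irreflexive e)
    (w_sym : forall i j, w i j = w j i)
    (w_pos : forall i j, e i j -> 0 < w i j)
    (connected : forall i j, connect e i j)
    (wstar : R) (wstar_pos : 0 < wstar)
    (hstar : exists V2 : {set 'I_n}, star_has_weight e w V2 wstar) :
  eigenvalue (signless_laplacian e w) wstar /\
  (stars_deg e w wstar <= mup wstar (char_poly (signless_laplacian e w)))%N.
Proof.
pose r (b : 'I_n) := odflt b [pick x in star_V1 e (nbhd e b)].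
have selfV1 b : b \in star_V1 e (nbhd e b) by rewrite inE eqxx.
have r1 b : r b \in star_V1 e (nbhd e b).
  rewrite /r; case: pickP => [x hx // | h]; by have := h b; rewrite selfV1.
have r2 b : nbhd e (r b) = nbhd e b by have := r1 b; rewrite inE => /eqP.
have rS b : [pick x in star_V1 e (nbhd e b)] = Some (r b).
  rewrite /r; case: pickP => [x hx|h] //; by have := h b; rewrite selfV1.
have r3 b : r (r b) = r b by rewrite {1}/r r2 rS.
pose B := [set b | star_has_weight e w (nbhd e b) wstar && (b != r b)].
have hB b : b \in B -> r b \notin B by rewrite !inE r2 r3 eqxx andbF.
have heig b : b \in B -> ('e_b - 'e_(r b)) *m signless_laplacian e w
    = wstar *: ('e_b - 'e_(r b) : 'rV_n).
  rewrite inE => /andP [hsw _].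
  move: hsw => /and3P [_ hdef hsum].
  set V2 := nbhd e b in hdef hsum.
  have hs x : x \in star_V1 e V2 -> strength e w x = wstar.
    move=> hx; rewrite -(eqP (forall_inP hsum x hx)) /strength.
    under eq_bigr do rewrite mxE.
    rewrite -big_mkcond /=; apply: eq_bigl => j.
    by move: hx; rewrite inE => /eqP <-; rewrite inE.
  have hc : r b \in star_V1 e V2 by exact: r1.
  have hb : b \in star_V1 e V2 by exact: selfV1.
  have hadj j : (if e b j then w b j else 0) = (if e (r b) j then w (r b) j else 0).
    have -> : e (r b) j = e b j.
      by move: (r2 b) => /setP /(_ j); rewrite !inE.
    case: ifP => // ebj.
    have hj : j \in V2 by rewrite inE.
    by move: (forall_inP hdef b hb) => /forall_inP/(_ _ hc)/forall_inP/(_ j hj)/eqP.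
  rewrite mulmxBl -!rowE; apply/rowP => j.
  rewrite !mxE !eqxx /= hs // hs // hadj [b == j]eq_sym [r b == j]eq_sym.
  by rewrite opprD addrACA subrr addr0 mulrBr !(mulrC wstar).
have hdiv := key hB heig.
have hdeg : (stars_deg e w wstar <= #|B|)%N.
  rewrite /stars_deg -sum1_card.
  rewrite (partition_big (nbhd e) (fun V2 => V2 \in stars_of_weight e w wstar)); last first.
    by move=> i; rewrite !inE => /andP [].
  apply: leq_sum => V2; rewrite inE => hV2.
  rewrite sum1_card.
  case hp : [pick x in star_V1 e V2] => [c|]; last first.
    move: hp; case: pickP => // h _.
    move: hV2 => /and3P [/andP [h1 _] _ _].
    by move: h1; rewrite (eq_card0 h).
  have hc : c \in star_V1 e V2 by move: hp; case: pickP => // y hy [<-].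
  have -> : (#|star_V1 e V2| - 1 = #|star_V1 e V2 :\ c|)%N.
    by rewrite (cardsD1 c) hc add1n subn1.
  apply: subset_leq_card; apply/subsetP => x; rewrite !inE => /andP [xc /eqP xV].
  rewrite unfold_in /= inE xV hV2 eqxx andbT /=.
  have -> : r x = c by rewrite /r xV hp.
  by [].
have hdeg1 : (0 < stars_deg e w wstar)%N.
  case: hstar => V2 hV2; rewrite /stars_deg (bigD1 V2) ?inE //=.
  move: hV2 => /and3P [/andP [h1 _] _ _]; apply: leq_trans (leq_addr _ _).
  by rewrite subn_gt0.
have hdivk k : (k <= #|B|)%N -> ('X - wstar%:P) ^+ k %| char_poly (signless_laplacian e w).
  by move=> hk; apply: dvdp_trans hdiv; apply: dvdp_exp2l.
split.
  rewrite eigenvalue_root_char -dvdp_XsubCl -(expr1 ('X - wstar%:P)).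
  by apply: hdivk; apply: leq_trans hdeg.
rewrite mup_geq ?monic_neq0 ?char_poly_monic //.
exact: hdivk.
Qed.
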